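(* Let $S>0$, $\zeta\in\{0,1\}$, $\phi\in\mathbb{R}$ and let $(u_n)_{n\in\mathbb{N}}$ be the $\phi$-market impact scenario defined below. (a) If $\phi\ge 1$, then $(u_n)$ is not admissible from a trading perspective. (b) If $\phi\in(-1,1)$, then $(u_n)$ is admissible from a trading perspective. (c) If $\phi\le -1$ and for every $x\in\mathbb{R}$ the sequence $(s_n(x))_{n\in\mathbb{N}}$ is bounded, then $(u_n)$ is admissible from a trading perspective. In particular, under the standing assumption that $(s_n(x))_{n}$ is bounded for every $x$ whenever $\phi\le -1$, the scenario is admissible if and only if $\phi\in(-\infty,1)$.
   Context: Fix $S>0$, $\zeta\in\{0,1\}$ and $\phi\in\mathbb{R}$. For $a,b\in\mathbb{R}$ write $a\vee b=\max(a,b)$. The $\phi$-market impact scenario starting from $x\in\mathbb{R}$ is the sequence of real-valued functions $(u_n)_{n\in\mathbb{N}}$ defined by $u_0(x)=x\vee(-S)$ and, for all $n\in\mathbb{N}$, $u_{n+1}(x)=\Big(\phi\big(1+\tfrac{s_n(x)}{S}\big)^{1+\zeta}u_n(x)\Big)\vee\big(-s_n(x)-S\big)$, where $s_n(x)=\sum_{k=0}^n u_k(x)$. The scenario is called admissible from a trading perspective if there exists $R>0$ such that for every $x\in(-R,R)$ the series $\sum_{n\ge0}u_n(x)$ converges. *)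

(* Defs.v *)
From Stdlib Require Import Reals.
Open Scope R_scope.

(* mis_pair S zeta phi x n = (u_n(x), s_n(x)) with s_n = sum_{k<=n} u_k *)
Fixpoint mis_pair (S : R) (zeta : nat) (phi : R) (x : R) (n : nat) : R * R :=
  match n with
  | O => let u0 := Rmax x (- S) in (u0, u0)
  | Datatypes.S m =>
      let (um, sm) := mis_pair S zeta phi x m in
      let un := Rmax (phi * (1 + sm / S) ^ (1 + zeta) * um) (- sm - S) in
      (un, sm + un)
  end.

Definition mis_u (S : R) (zeta : nat) (phi : R) (n : nat) (x : R) : R :=
  fst (mis_pair S zeta phi x n).

Definition mis_s (S : R) (zeta : nat) (phi : R) (n : nat) (x : R) : R :=
  sum_f_R0 (fun k => mis_u S zeta phi k x) n.

Definition admissible (u : nat -> R -> R) : Prop :=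
  exists R0 : R, R0 > 0 /\
    forall x : R, - R0 < x < R0 -> exists l : R, infinite_sum (fun n => u n x) l.

Definition partial_sums_bounded (S : R) (zeta : nat) (phi : R) : Prop :=
  forall x : R, exists M : R, forall n : nat, Rabs (mis_s S zeta phi n x) <= M.

(* Main.v *)
Require Import Defs.
From Stdlib Require Import Reals Lra Lia Psatz Classical.
Open Scope R_scope.

Lemma snd_pair T z phi x n : snd (mis_pair T z phi x n) = mis_s T z phi n x.
Proof.
  induction n as [|n IH]; simpl.
  - unfold mis_s, mis_u; simpl. reflexivity.
  - unfold mis_s in *; simpl. destruct (mis_pair T z phi x n) as [um sm] eqn:E.
    simpl in IH. simpl. unfold mis_u at 2. simpl. rewrite E. simpl. subst sm. reflexivity.
Qed.

Lemma u_S T z phi x n : mis_u T z phi (S n) x =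
  Rmax (phi * (1 + mis_s T z phi n x / T) ^ (1 + z) * mis_u T z phi n x) (- mis_s T z phi n x - T).
Proof.
  rewrite <- snd_pair. unfold mis_u. simpl.
  destruct (mis_pair T z phi x n) as [um sm]. reflexivity.
Qed.

Lemma s_S T z phi x n : mis_s T z phi (S n) x = mis_s T z phi n x + mis_u T z phi (S n) x.
Proof. reflexivity. Qed.

Lemma s_0 T z phi x : mis_s T z phi 0 x = Rmax x (- T).
Proof. reflexivity. Qed.

Lemma u_0 T z phi x : mis_u T z phi 0 x = Rmax x (- T).
Proof. reflexivity. Qed.

Lemma s_ge T z phi x n : T > 0 -> mis_s T z phi n x >= - T.
Proof.
  intros HS. destruct n.
  - rewrite s_0. generalize (Rmax_r x (-T)); lra.
  - rewrite s_S, u_S. generalize (Rmax_r (phi * (1 + mis_s T z phi n x / T) ^ (1 + z) * mis_u T z phi n x) (- mis_s T z phi n x - T)); lra.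
Qed.

Lemma part_a T z phi : T > 0 -> phi >= 1 -> ~ admissible (mis_u T z phi).
Proof.
  intros HT Hphi [R0 [HR0 Hadm]].
  set (x := R0 / 2).
  assert (Hx : 0 < x) by (unfold x; lra).
  assert (Hinv : forall n, mis_u T z phi n x >= x /\ mis_s T z phi n x >= 0).
  { induction n as [|n [IHu IHs]].
    - rewrite u_0, s_0, Rmax_left by lra. lra.
    - assert (Hy : 1 <= (1 + mis_s T z phi n x / T) ^ (1 + z)).
      { apply pow_R1_Rle. assert (0 <= mis_s T z phi n x / T) by (apply Rmult_le_pos; [lra | left; apply Rinv_0_lt_compat; lra]). lra. }
      assert (Hu : mis_u T z phi (S n) x >= x).
      { rewrite u_S.
        eapply Rge_trans; [apply Rle_ge, Rmax_l|].
        set (Y := (1 + mis_s T z phi n x / T) ^ (1 + z)) in *.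
        set (U := mis_u T z phi n x) in *.
        assert (phi * Y >= 1) by nra. nra. }
      split; [exact Hu|]. rewrite s_S. lra. }
  destruct (Hadm x) as [l Hl]; [unfold x; lra|].
  destruct (Hl (x/2)) as [N HN]; [lra|].
  assert (H1 := HN N (le_n N)). assert (H2 := HN (S N) (le_S _ _ (le_n N))).
  unfold Rdist in H1, H2. change (sum_f_R0 (fun n => mis_u T z phi n x) N) with (mis_s T z phi N x) in H1.
  change (sum_f_R0 (fun n => mis_u T z phi n x) (S N)) with (mis_s T z phi (S N) x) in H2.
  rewrite s_S in H2. destruct (Hinv (S N)) as [Hu _].
  apply Rabs_def2 in H1. apply Rabs_def2 in H2. lra.
Qed.

Lemma cauchy_energy (Y : nat -> R) (G : R -> R) :
  (forall n, 0 <= Y n) -> (forall y, 0 <= y -> 0 <= G y) ->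
  (forall p q, 0 <= p -> p <= q -> G p <= G q) ->
  (forall n, Y (S (S (S n))) + G (Y (S (S n))) <= Y (S (S n)) + G (Y (S n))) ->
  (forall eps, eps > 0 -> exists delta, delta > 0 /\ forall n,
      (Y (S (S n)) + G (Y (S n))) - (Y (S (S (S n))) + G (Y (S (S n)))) < delta ->
      Rabs (Y (S (S n)) - Y (S n)) < eps) ->
  Cauchy_crit Y.
Proof.
  intros HY HG HGm Hdec Hd.
  set (H := fun n => Y (S (S n)) + G (Y (S n))).
  assert (Hlb : forall n, 0 <= H n).
  { intro n. unfold H. generalize (HY (S (S n))) (HG _ (HY (S n))). lra. }
  destruct (decreasing_cv H) as [L HL].
  { intro n. apply Hdec. }
  { exists 0. intros y [i ->]. unfold opp_seq. generalize (Hlb i). lra. }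
  assert (HF : forall p q, 0 <= p -> 0 <= q -> Rabs (p - q) <= Rabs ((p + G p) - (q + G q))).
  { intros p q Hp Hq. destruct (Rle_lt_dec p q) as [Hpq|Hpq].
    - generalize (HGm p q Hp Hpq). intro.
      rewrite (Rabs_left1 (p - q)) by lra. rewrite (Rabs_left1 (p + G p - (q + G q))) by lra. lra.
    - generalize (HGm q p Hq (Rlt_le _ _ Hpq)). intro.
      rewrite (Rabs_right (p - q)) by lra. rewrite (Rabs_right (p + G p - (q + G q))) by lra. lra. }
  intros eps Heps.
  destruct (Hd (eps/4)) as [delta [Hdel Hdd]]; [lra|].
  destruct (HL (Rmin (delta/2) (eps/4))) as [N HN].
  { apply Rmin_glb_lt; lra. }
  assert (Hc : forall n, (n >= N)%nat -> Rabs (Y (S n) + G (Y (S n)) - L) < eps / 2).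
  { intros n Hn.
    assert (A1 := HN n Hn). assert (A2 := HN (S n) (le_S _ _ Hn)).
    unfold Rdist in A1, A2.
    assert (Hm1 := Rmin_l (delta/2) (eps/4)). assert (Hm2 := Rmin_r (delta/2) (eps/4)).
    apply Rabs_def2 in A1. apply Rabs_def2 in A2.
    assert (Hs : Rabs (Y (S (S n)) - Y (S n)) < eps / 4).
    { apply Hdd. unfold H in A1, A2. lra. }
    apply Rabs_def2 in Hs. unfold H in A1, A2.
    apply Rabs_def1; lra. }
  exists (S N). intros n m Hn Hm. unfold Rdist.
  destruct n as [|n]; [lia|]. destruct m as [|m]; [lia|].
  eapply Rle_lt_trans; [apply HF; apply HY|].
  assert (B1 := Hc n ltac:(lia)). assert (B2 := Hc m ltac:(lia)).
  apply Rabs_def2 in B1. apply Rabs_def2 in B2. apply Rabs_def1; lra.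
Qed.

Lemma stuck T z phi x N : T > 0 -> mis_s T z phi N x = - T ->
  forall j, mis_s T z phi (j + N) x = - T.
Proof.
  intros HT H0. induction j as [|j IH]; simpl; [exact H0|].
  rewrite s_S, u_S, IH.
  replace (1 + - T / T) with 0 by (field; lra).
  simpl. rewrite Rmult_0_l, Rmult_0_r, Rmult_0_l.
  replace (- - T - T) with 0 by ring. rewrite Rmax_left; lra.
Qed.

Lemma cauchy_scale (Y s : nat -> R) T : T > 0 -> (forall n, s n = T * (Y n - 1)) ->
  Cauchy_crit Y -> Cauchy_crit s.
Proof.
  intros HT Hs HY eps Heps.
  destruct (HY (eps / T)) as [N HN].
  { apply Rdiv_lt_0_compat; lra. }
  exists N. intros n m Hn Hm. unfold Rdist. rewrite !Hs.
  replace (T * (Y n - 1) - T * (Y m - 1)) with (T * (Y n - Y m)) by ring.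
  rewrite Rabs_mult, Rabs_right by lra.
  specialize (HN n m Hn Hm). unfold Rdist in HN.
  apply (Rmult_lt_compat_l T) in HN; [|lra].
  replace (T * (eps / T)) with eps in HN by (field; lra). exact HN.
Qed.

Lemma part_c T z phi x : T > 0 -> (z = 0%nat \/ z = 1%nat) -> phi <= -1 ->
  Cauchy_crit (fun n => mis_s T z phi n x).
Proof.
  intros HT Hz Hphi.
  destruct (classic (exists N, mis_s T z phi N x = - T)) as [[N HN]|Hno].
  - intros eps Heps. exists N. intros n m Hn Hm.
    replace n with ((n - N) + N)%nat by lia. replace m with ((m - N) + N)%nat by lia.
    rewrite !(stuck T z phi x N HT HN). unfold Rdist. rewrite Rminus_diag, Rabs_R0. exact Heps.
  - set (Y := fun n => 1 + mis_s T z phi n x / T).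
    assert (HYp : forall n, 0 < Y n).
    { intro n. unfold Y. assert (mis_s T z phi n x > - T).
      { destruct (s_ge T z phi x n HT); [assumption|]. exfalso; apply Hno; exists n; assumption. }
      assert (- T / T < mis_s T z phi n x / T).
      { unfold Rdiv. apply Rmult_lt_compat_r; [apply Rinv_0_lt_compat; lra| lra]. }
      replace (- T / T) with (-1) in H0 by (field; lra). lra. }
    assert (Hrec : forall n, mis_u T z phi (S n) x = phi * Y n ^ (1 + z) * mis_u T z phi n x).
    { intro n. rewrite u_S. fold (Y n).
      destruct (Rle_lt_dec (- mis_s T z phi n x - T) (phi * Y n ^ (1 + z) * mis_u T z phi n x)) as [Hl|Hl].
      - apply Rmax_left; exact Hl.
      - exfalso. apply Hno. exists (S n). rewrite s_S, u_S. fold (Y n).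
        rewrite Rmax_right by lra. ring. }
    assert (HYu : forall n, Y (S n) - Y n = mis_u T z phi (S n) x / T).
    { intro n. unfold Y. rewrite s_S. field. lra. }
    assert (HYr : forall n, Y (S (S n)) - Y (S n) = phi * Y (S n) ^ (1 + z) * (Y (S n) - Y n)).
    { intro n. rewrite !HYu, Hrec. unfold Rdiv. ring. }
    apply (cauchy_scale Y _ T HT).
    { intro n. unfold Y. field. lra. }
    set (a := - phi).
    destruct Hz as [-> | ->]; simpl in HYr.
    + apply (cauchy_energy Y (fun y => a * y ^ 2 / 2)).
      * intro n; apply Rlt_le, HYp.
      * intros y Hy. cbv beta. unfold a. assert (0 <= y ^ 2) by (apply pow_le; lra). assert (0 <= - phi) by lra.
        apply Rmult_le_pos; [|lra]. apply Rmult_le_pos; lra.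
      * intros p q Hp Hpq. cbv beta. unfold a. assert (p ^ 2 <= q ^ 2) by (apply pow_incr; lra).
        assert (0 <= - phi) by lra.
        apply Rmult_le_compat_r; [lra|]. apply Rmult_le_compat_l; lra.
      * intro n. specialize (HYr (S n)). cbv beta. unfold a. simpl in *.
        set (p := Y (S (S n))) in *. set (q := Y (S n)) in *.
        assert (E : Y (S (S (S n))) = p + phi * (p * 1) * (p - q)) by lra. rewrite E.
        assert (0 <= (- phi) * ((p - q) * (p - q))) by (apply Rmult_le_pos; [lra | apply Rle_0_sqr]).
        assert (Eq : p + - phi * (q * (q * 1)) / 2 - (p + phi * (p * 1) * (p - q) + - phi * (p * (p * 1)) / 2)
                 = (- phi) * ((p - q) * (p - q)) / 2) by field.
        lra.
      * intros eps Heps. exists (a * eps ^ 2 / 2). split; [unfold a; nra|].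
        intros n Hn. cbv beta in Hn. specialize (HYr (S n)).
        destruct (Rlt_le_dec (Rabs (Y (S (S n)) - Y (S n))) eps) as [Hlt|Hge]; [exact Hlt|].
        exfalso. assert (Hsq : eps ^ 2 <= (Y (S (S n)) - Y (S n)) ^ 2).
        { rewrite <- (pow2_abs (Y (S (S n)) - Y (S n))). nra. }
        unfold a in *. simpl in *. nra.
    + apply (cauchy_energy Y (fun y => a * y ^ 3 / 3)).
      * intro n; apply Rlt_le, HYp.
      * intros y Hy. cbv beta. unfold a. assert (0 <= y ^ 3) by (apply pow_le; lra). assert (0 <= - phi) by lra.
        apply Rmult_le_pos; [|lra]. apply Rmult_le_pos; lra.
      * intros p q Hp Hpq. cbv beta. unfold a. assert (p ^ 3 <= q ^ 3) by (apply pow_incr; lra).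
        assert (0 <= - phi) by lra.
        apply Rmult_le_compat_r; [lra|]. apply Rmult_le_compat_l; lra.
      * intro n. cbv beta. specialize (HYr (S n)). assert (HA := HYp (S n)). assert (HB := HYp (S (S n))).
        unfold a. simpl in *. 
        set (p := Y (S (S n))) in *. set (q := Y (S n)) in *.
        assert (E : Y (S (S (S n))) = p + phi * (p * (p * 1)) * (p - q)) by lra.
        rewrite E.
        assert (0 <= (- phi) * ((p - q) * (p - q) * (q + 2 * p))) by (apply Rmult_le_pos; [lra| apply Rmult_le_pos; [apply Rle_0_sqr| lra]]).
        assert (Eq : p + - phi * (q * (q * (q * 1))) / 3 - (p + phi * (p * (p * 1)) * (p - q) + - phi * (p * (p * (p * 1))) / 3)
                 = (- phi) * ((p - q) * (p - q) * (q + 2 * p)) / 3) by field.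
        lra.
      * intros eps Heps. exists (a * eps ^ 3 / 3). split; [unfold a; assert (0 < eps ^ 3) by (apply pow_lt; lra); nra|].
        intros n Hn. cbv beta in Hn. specialize (HYr (S n)). assert (HA := HYp (S n)). assert (HB := HYp (S (S n))).
        destruct (Rlt_le_dec (Rabs (Y (S (S n)) - Y (S n))) eps) as [Hlt|Hge]; [exact Hlt|].
        exfalso.
        set (p := Y (S (S n))) in *. set (q := Y (S n)) in *.
        assert (E : Y (S (S (S n))) = p - a * p ^ 2 * (p - q)) by (unfold a; simpl in *; lra).
        rewrite E in Hn.
        assert (Hdec : p + a * q ^ 3 / 3 - (p - a * p ^ 2 * (p - q) + a * p ^ 3 / 3)
                       = a * ((p - q) ^ 2 * (q + 2 * p)) / 3) by (simpl; field).
        assert (Hq2 : Rabs (p - q) <= q + 2 * p).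
        { unfold Rabs; destruct (Rcase_abs (p - q)); lra. }
        assert (Hsq : (p - q) ^ 2 = Rabs (p - q) ^ 2) by (rewrite pow2_abs; reflexivity).
        assert (H3 : eps ^ 3 <= Rabs (p - q) ^ 3) by (apply pow_incr; split; lra).
        assert (H4 : Rabs (p - q) ^ 3 <= (p - q) ^ 2 * (q + 2 * p)).
        { rewrite Hsq. simpl. assert (0 <= Rabs (p - q)) by apply Rabs_pos. nra. }
        assert (Ha : a >= 1) by (unfold a; lra).
        assert (a * eps ^ 3 <= a * ((p - q) ^ 2 * (q + 2 * p))) by (apply Rmult_le_compat_l; lra).
        lra.
Qed.

Lemma geom_cauchy (s : nat -> R) C q : 0 <= C -> 0 <= q < 1 ->
  (forall n, Rabs (s (S n) - s n) <= C * q ^ n) -> Cauchy_crit s.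
Proof.
  intros HC Hq Hs.
  assert (Hb : forall n j, Rabs (s (j + n)%nat - s n) <= C * q ^ n / (1 - q)).
  { intros n j.
    assert (Hj : Rabs (s (j + n)%nat - s n) <= C * q ^ n * (1 - q ^ j) / (1 - q)).
    { induction j as [|j IH]; simpl.
      - rewrite Rminus_diag, Rabs_R0. replace (1 - 1) with 0 by ring. unfold Rdiv. rewrite Rmult_0_r, Rmult_0_l. lra.
      - eapply Rle_trans; [|apply Rle_trans with (C * q ^ (j + n) + C * q ^ n * (1 - q ^ j) / (1 - q))].
        + replace (s (S (j + n)) - s n) with ((s (S (j + n)) - s (j + n)%nat) + (s (j + n)%nat - s n)) by ring.
          apply Rle_trans with (1 := Rabs_triang _ _). apply Rplus_le_compat; [apply Hs|apply IH].
        + lra.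
        + rewrite pow_add. right. field. lra. }
    eapply Rle_trans; [exact Hj|]. unfold Rdiv.
    apply Rmult_le_compat_r; [left; apply Rinv_0_lt_compat; lra|].
    assert (0 <= q ^ j) by (apply pow_le; lra). assert (0 <= C * q ^ n) by (apply Rmult_le_pos; [lra|apply pow_le; lra]).
    nra. }
  intros eps Heps.
  destruct (pow_lt_1_zero q ltac:(rewrite Rabs_right; lra) (eps * (1 - q) / (C + 1))) as [N HN].
  { apply Rdiv_lt_0_compat; [apply Rmult_lt_0_compat|]; lra. }
  assert (Key : forall n m, (n >= N)%nat -> (m >= n)%nat -> Rdist (s m) (s n) < eps).
  { intros n m Hn Hm. unfold Rdist. replace m with ((m - n) + n)%nat by lia.
    eapply Rle_lt_trans; [apply Hb|].
    specialize (HN n Hn). rewrite Rabs_right in HN by (apply Rle_ge, pow_le; lra).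
    apply Rmult_lt_compat_r with (r := C + 1) in HN; [|lra].
    replace (eps * (1 - q) / (C + 1) * (C + 1)) with (eps * (1 - q)) in HN by (field; lra).
    assert (0 <= q ^ n) by (apply pow_le; lra).
    apply Rmult_lt_reg_r with (1 - q); [lra|].
    replace (C * q ^ n / (1 - q) * (1 - q)) with (C * q ^ n) by (field; lra). nra. }
  exists N. intros n m Hn Hm. destruct (Compare_dec.le_lt_dec n m) as [H|H].
  - rewrite Rdist_sym. apply Key; lia.
  - apply Key; lia.
Qed.

Lemma max_abs A B : B <= 0 -> Rabs (Rmax A B) <= Rabs A.
Proof.
  intros HB. unfold Rmax. destruct (Rle_dec A B).
  - rewrite !Rabs_left1 by lra. lra.
  - apply Rle_refl.
Qed.

Lemma part_b T z phi : T > 0 -> (z = 0%nat \/ z = 1%nat) -> -1 < phi < 1 ->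
  exists R0, R0 > 0 /\ forall x, - R0 < x < R0 -> Cauchy_crit (fun n => mis_s T z phi n x).
Proof.
  intros HT Hz Hphi.
  set (a := Rabs phi).
  assert (Ha : 0 <= a < 1) by (unfold a; split; [apply Rabs_pos| unfold Rabs; destruct (Rcase_abs phi); lra]).
  set (r := (1 - a) / 6). set (q := (1 + a) / 2).
  exists (r * T * (1 - q)). split.
  { unfold r, q. apply Rmult_gt_0_compat; [apply Rmult_gt_0_compat|]; lra. }
  intros x Hx.
  assert (HxR : Rabs x < r * T * (1 - q)) by (apply Rabs_def1; lra).
  assert (Hrq : r * T * (1 - q) < T).
  { assert (Hrq1 : r * (1 - q) < 1) by (unfold r, q; nra).
    replace (r * T * (1 - q)) with (T * (r * (1 - q))) by ring.
    rewrite <- (Rmult_1_r T) at 2. apply Rmult_lt_compat_l; lra. }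
  assert (Inv : forall n, Rabs (mis_u T z phi n x) <= q ^ n * Rabs x /\
                          Rabs (mis_s T z phi n x) <= Rabs x * (1 - q ^ (S n)) / (1 - q)).
  { induction n as [|n [IHu IHs]].
    - rewrite u_0, s_0. assert (x >= - T) by lra. rewrite Rmax_left by lra. simpl.
      split; [lra|]. right. field. unfold q; lra.
    - assert (Hsn : Rabs (mis_s T z phi n x) < r * T).
      { eapply Rle_lt_trans; [exact IHs|].
        assert (0 < q ^ S n) by (apply pow_lt; unfold q; lra).
        apply Rmult_lt_reg_r with (1 - q); [unfold q; lra|].
        replace (Rabs x * (1 - q ^ S n) / (1 - q) * (1 - q)) with (Rabs x * (1 - q ^ S n)) by (field; unfold q; lra).
        assert (0 <= Rabs x) by apply Rabs_pos. nra. }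
      set (y := 1 + mis_s T z phi n x / T).
      assert (Hy0 : 0 <= y).
      { unfold y. generalize (s_ge T z phi x n HT). intro H.
        assert (- T / T <= mis_s T z phi n x / T) by (unfold Rdiv; apply Rmult_le_compat_r; [left; apply Rinv_0_lt_compat|]; lra).
        replace (- T / T) with (-1) in H0 by (field; lra). lra. }
      assert (Hy1 : y <= 1 + r).
      { unfold y. apply Rabs_def2 in Hsn.
        assert (mis_s T z phi n x / T <= r) by (apply Rmult_le_reg_r with T; [lra|]; unfold Rdiv; rewrite Rmult_assoc, Rinv_l, Rmult_1_r; lra).
        lra. }
      assert (Hr : 0 < r <= 1/6) by (unfold r; lra).
      assert (Hyk : y ^ (1 + z) <= 1 + 3 * r).
      { destruct Hz as [-> | ->]; simpl; nra. }
      assert (Hyk0 : 0 <= y ^ (1 + z)) by (apply pow_le; lra).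
      assert (Hu : Rabs (mis_u T z phi (S n) x) <= q ^ S n * Rabs x).
      { rewrite u_S. fold y. eapply Rle_trans; [apply max_abs|].
        { replace (- mis_s T z phi n x - T) with (- (T * y)) by (unfold y; field; lra). nra. }
        rewrite !Rabs_mult. fold a. rewrite (Rabs_right (y ^ (1 + z))) by lra.
        assert (0 <= Rabs (mis_u T z phi n x)) by apply Rabs_pos.
        assert (a * y ^ (1 + z) <= q).
        { apply Rle_trans with (a * (1 + 3 * r)); [apply Rmult_le_compat_l; lra|].
          unfold q, r. assert (0 <= (1 - a) * (1 - a)) by apply Rle_0_sqr.
          assert (E : a * (1 + 3 * ((1 - a) / 6)) = (1 + a) / 2 - (1 - a) * (1 - a) / 2) by field. lra. }
        simpl. apply Rle_trans with (q * Rabs (mis_u T z phi n x)); [|rewrite Rmult_assoc; apply Rmult_le_compat_l; [unfold q; lra | exact IHu]].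
        apply Rmult_le_compat_r; [lra|]. assumption. }
      split; [exact Hu|].
      rewrite s_S. eapply Rle_trans; [apply Rabs_triang|].
      apply Rle_trans with (Rabs x * (1 - q ^ S n) / (1 - q) + q ^ S n * Rabs x); [lra|].
      right. simpl. field. unfold q; lra. }
  apply (geom_cauchy _ (Rabs x) q); [apply Rabs_pos| unfold q; lra|].
  intro n. rewrite s_S. replace (mis_s T z phi n x + mis_u T z phi (S n) x - mis_s T z phi n x) with (mis_u T z phi (S n) x) by ring.
  destruct (Inv (S n)) as [H _]. simpl in H. simpl.
  assert (0 <= Rabs x) by apply Rabs_pos. assert (0 <= q ^ n) by (apply pow_le; unfold q; lra).
  assert (q <= 1) by (unfold q; lra).
  assert (Hw : 0 <= q ^ n * Rabs x) by (apply Rmult_le_pos; assumption).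
  rewrite Rmult_assoc in H. rewrite Rmult_comm.
  eapply Rle_trans; [exact H|]. rewrite <- (Rmult_1_l (q ^ n * Rabs x)) at 2.
  apply Rmult_le_compat_r; assumption.
Qed.

Lemma adm_of_cauchy T z phi R0 : R0 > 0 ->
  (forall x, - R0 < x < R0 -> Cauchy_crit (fun n => mis_s T z phi n x)) ->
  admissible (mis_u T z phi).
Proof.
  intros HR H. exists R0. split; [exact HR|].
  intros x Hx. destruct (R_complete _ (H x Hx)) as [l Hl]. exists l. exact Hl.
Qed.

Theorem theorem4p1 (S : R) (zeta : nat) (phi : R) :
  S > 0 -> (zeta = 0%nat \/ zeta = 1%nat) ->
  (phi >= 1 -> ~ admissible (mis_u S zeta phi)) /\
  (-1 < phi < 1 -> admissible (mis_u S zeta phi)) /\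
  (phi <= -1 -> partial_sums_bounded S zeta phi -> admissible (mis_u S zeta phi)) /\
  ((phi <= -1 -> partial_sums_bounded S zeta phi) ->
     (admissible (mis_u S zeta phi) <-> phi < 1)).
Proof.
  intros HS Hz.
  assert (Ha : phi >= 1 -> ~ admissible (mis_u S zeta phi)) by (intro; apply part_a; assumption).
  assert (Hb : -1 < phi < 1 -> admissible (mis_u S zeta phi)).
  { intro Hp. destruct (part_b S zeta phi HS Hz Hp) as [R0 [HR H]].
    exact (adm_of_cauchy S zeta phi R0 HR H). }
  assert (Hc : phi <= -1 -> admissible (mis_u S zeta phi)).
  { intro Hp. apply (adm_of_cauchy S zeta phi 1); [lra|].
    intros x _. apply part_c; assumption. }
  split; [exact Ha|]. split; [exact Hb|]. split; [intros Hp _; apply Hc, Hp|].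
  intros _. split.
  - intro Had. destruct (Rlt_le_dec phi 1) as [H|H]; [exact H|].
    exfalso. apply (Ha (Rle_ge _ _ H) Had).
  - intro H. destruct (Rle_lt_dec phi (-1)) as [H1|H1]; [apply Hc, H1|apply Hb; lra].
Qed.
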